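(* For every odd $m\ge3$, the suffix array of $\bar{\mathsf{F}}_m$ is an arithmetically progressed permutation with ratio $f_{m-2}$ (and first entry $f_m$).
   Context: Fibonacci words: $\mathsf{F}_1=\mathtt{b}$, $\mathsf{F}_2=\mathtt{a}$, $\mathsf{F}_m=\mathsf{F}_{m-1}\mathsf{F}_{m-2}$ for $m\ge3$; $f_m=|\mathsf{F}_m|$. $\bar{\mathsf{F}}_m$ is $\mathsf{F}_m$ with every $\mathtt{a}$ replaced by $\mathtt{b}$ and every $\mathtt{b}$ by $\mathtt{a}$. Order $\mathtt{a}<\mathtt{b}$; lexicographic order with a proper prefix smaller than the longer string; suffix array $\mathsf{SA}_{\mathsf{T}}$: permutation of $[1..n]$ such that $\mathsf{T}[\mathsf{SA}_{\mathsf{T}}[i]..n]$ is the $i$-th smallest suffix. $x\bmod n$: representative in $[1..n]$. An arithmetically progressed permutation of length $n$ with ratio $k\in[1..n-1]$ is a permutation $P$ of $[1..n]$ with $P[i+1]=P[i]+k\bmod n$. *)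

(* Defs.v *)
From mathcomp Require Import all_boot.
Set Implicit Arguments. Unset Strict Implicit. Unset Printing Implicit Defensive.

(* Alphabet: letter a = false, letter b = true, so that a < b
   corresponds to false < true. *)
Definition la : bool := false.
Definition lb : bool := true.

(* Fibonacci words: F 1 = b, F 2 = a, F m = F (m-1) F (m-2) for m >= 3.
   (F 0 is an unused placeholder.) *)
Fixpoint fibw (m : nat) : seq bool :=
  match m with
  | 0 => [::]
  | 1 => [:: lb]
  | 2 => [:: la]
  | (k.+1 as m1).+1 as m2 => fibw m1 ++ fibw k
  end.

Definition fibl (m : nat) : nat := size (fibw m).

Definition compl (w : seq bool) : seq bool := map negb w.

Fixpoint lex_lt (u v : seq bool) : bool :=
  match u, v with
  | [::], [::] => false
  | [::], _ :: _ => true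
  | _ :: _, [::] => false
  | x :: u', y :: v' => (x < y) || ((x == y) && lex_lt u' v')
  end.

(* 1-indexed suff1 T[i..n] *)
Definition suff1 (T : seq bool) (i : nat) : seq bool := drop i.-1 T.

Definition at1 (P : seq nat) (i : nat) : nat := nth 0 P i.-1.

Definition is_suffix_array (T : seq bool) (P : seq nat) : Prop :=
  perm_eq P (iota 1 (size T)) /\
  forall i, 1 <= i < size T ->
    lex_lt (suff1 T (at1 P i)) (suff1 T (at1 P i.+1)).

(* x mod n with representative in [1..n] *)
Definition mod1 (x n : nat) : nat := (x + n - 1) %% n + 1.

Definition is_AP_perm (n k : nat) (P : seq nat) : Prop :=
  size P = n /\ perm_eq P (iota 1 n) /\ 1 <= k <= n - 1 /\
  forall i, 1 <= i < n -> at1 P i.+1 = mod1 (at1 P i + k) n.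

(* Main.v *)
Require Import Defs.
From mathcomp Require Import all_boot.
From mathcomp Require Import zify.

Lemma fiblS m : fibl m.+2 = fibl m.+1 + fibl m.
Proof. case: m => [//|m]. by rewrite /fibl /= size_cat. Qed.

Lemma fibw_rec m : fibw m.+3 = fibw m.+2 ++ fibw m.+1.
Proof. by []. Qed.

Lemma fibl_pos m : 0 < m -> 0 < fibl m.
Proof.
elim: m {-2}m (leqnn m) => [|N IH] [|[|m]] //= Hm _.
rewrite fiblS; have := IH m.+1 ltac:(lia) isT; lia.
Qed.

Lemma cassini m : fibl m.+1 * fibl m.+1 + odd m = fibl m * fibl m + fibl m * fibl m.+1 + ~~ odd m.
Proof.
elim: m => [//|m IH]. rewrite fiblS /=. case: (odd m) IH => /= IH; nia.
Qed.

Lemma count_b m : count id (fibw m.+2) = fibl m.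
Proof.
elim: m {-2}m (leqnn m) => [|N IH] [|[|m]] //= Hm.
rewrite count_cat fiblS -/(fibw m.+3) -/(fibw m.+2) IH ?IH; lia.
Qed.

Definition cnt m p := count id (take p (fibw m)).

Definition Sm m := forall p, p <= fibl m.+2 ->
  cnt m.+2 p * fibl m.+2 <= p.+1 * fibl m - odd m < (cnt m.+2 p).+1 * fibl m.+2.

Lemma A1 (a0 a1 p t : nat) : a0 * a0 + a0 * a1 = a1 * a1 + 1 -> p <= a0 + 2*a1 ->
  t*(a0+2*a1) <= (p+1)*a1 - 0 < (t+1)*(a0+2*a1) ->
  t*(2*a0+3*a1) <= (p+1)*(a0+a1) - 1 < (t+1)*(2*a0+3*a1).
Proof. move=> H1 H2 /andP[H3 H4]. apply/andP; split; nia. Qed.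
Lemma A0 (a0 a1 p t : nat) : a0 * a0 + a0 * a1 + 1 = a1 * a1 -> p <= a0 + 2*a1 ->
  t*(a0+2*a1) <= (p+1)*a1 - 1 < (t+1)*(a0+2*a1) ->
  t*(2*a0+3*a1) <= (p+1)*(a0+a1) - 0 < (t+1)*(2*a0+3*a1).
Proof. move=> H1 H2 /andP[H3 H4]. apply/andP; split; nia. Qed.
Lemma B1 (a0 a1 r t : nat) : a0 * a0 + a0 * a1 = a1 * a1 + 1 -> r <= a0 + a1 ->
  t*(a0+a1) <= (r+1)*a0 - 1 < (t+1)*(a0+a1) ->
  (a1+t)*(2*a0+3*a1) <= (a0+2*a1+r+1)*(a0+a1) - 1 < (a1+t+1)*(2*a0+3*a1).
Proof. move=> H1 H2 /andP[H3 H4]. apply/andP; split; nia. Qed.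
Lemma B0 (a0 a1 r t : nat) : a0 * a0 + a0 * a1 + 1 = a1 * a1 -> r <= a0 + a1 ->
  t*(a0+a1) <= (r+1)*a0 - 0 < (t+1)*(a0+a1) ->
  (a1+t)*(2*a0+3*a1) <= (a0+2*a1+r+1)*(a0+a1) - 0 < (a1+t+1)*(2*a0+3*a1).
Proof. move=> H1 H2 /andP[H3 H4]. apply/andP; split; nia. Qed.

Lemma S01 : Sm 0 /\ Sm 1.
Proof.
split.
- move=> p; rewrite /cnt /=; case: p => [|[|p]] //.
- move=> p; rewrite /cnt /=; case: p => [|[|[|p]]] //.
Qed.

Lemma Sstep m : Sm m -> Sm m.+1 -> Sm m.+2.
Proof.
move=> Hm Hm1 p Hp.
have C := cassini m.
have E2 := fiblS m. have E3 := fiblS m.+1. have E4 := fiblS m.+2.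
have Oo : odd m.+2 = odd m by rewrite /= negbK.
rewrite Oo.
have Hsz : size (fibw m.+3) = fibl m.+3 by [].
case: (leqP p (fibl m.+3)) => Hp3.
- have Hc : cnt m.+4 p = cnt m.+3 p by rewrite /cnt fibw_rec takel_cat ?Hsz.
  rewrite Hc.
  have := Hm1 p Hp3. rewrite /= .
  move: (cnt m.+3 p) => t H.
  rewrite ?E4 ?E3 ?E2 in Hp Hp3 H *. rewrite ?E2 in C.
  case: (odd m) C H => /= C H.
  + have := A1 (fibl m) (fibl m.+1) p t ltac:(lia) ltac:(lia) ltac:(rewrite ?addn1; move: H; rewrite ?mulnDr ?mulnDl; lia).
    rewrite ?addn1 ?mulnDr ?mulnDl; lia.
  + have := A0 (fibl m) (fibl m.+1) p t ltac:(lia) ltac:(lia) ltac:(rewrite ?addn1; move: H; rewrite ?mulnDr ?mulnDl; lia).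
    rewrite ?addn1 ?mulnDr ?mulnDl; lia.
- have Hr : p - fibl m.+3 <= fibl m.+2 by rewrite E4 in Hp; lia.
  have Hc : cnt m.+4 p = fibl m.+1 + cnt m.+2 (p - fibl m.+3).
    rewrite /cnt fibw_rec take_cat Hsz ltnNge (ltnW Hp3) /= count_cat.
    by rewrite -/(fibw m.+3) count_b.
  rewrite Hc.
  have := Hm (p - fibl m.+3) Hr.
  move: (cnt m.+2 (p - fibl m.+3)) => t H.
  have -> : p = fibl m.+3 + (p - fibl m.+3) by lia.
  move: (p - fibl m.+3) Hr H => r Hr H.
  rewrite ?E4 ?E3 ?E2 in Hr H *. rewrite ?E2 in C.
  case: (odd m) C H => /= C H.
  + have := B1 (fibl m) (fibl m.+1) r t ltac:(lia) ltac:(lia) ltac:(rewrite ?addn1; move: H; rewrite ?mulnDr ?mulnDl; lia).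
    rewrite ?addn1 ?mulnDr ?mulnDl; lia.
  + have := B0 (fibl m) (fibl m.+1) r t ltac:(lia) ltac:(lia) ltac:(rewrite ?addn1; move: H; rewrite ?mulnDr ?mulnDl; lia).
    rewrite ?addn1 ?mulnDr ?mulnDl; lia.
Qed.

Lemma Sall m : Sm m.
Proof.
suff : Sm m /\ Sm m.+1 by case.
elim: m => [|m [H1 H2]]; first exact: S01.
split => //; exact: Sstep.
Qed.


Section Order.
Variables (T : seq bool) (n k : nat) (sig : nat -> nat).
Hypotheses (HT : size T = n) (Hk : 0 < k)
  (Hsig : forall p, 1 <= p <= n -> sig p < n)
  (Hn : sig n = n.-1)
  (Hstep : forall p, 1 <= p < n -> sig p.+1 = if sig p + k < n then sig p + k else sig p + k - n)
  (Hlet : forall p, 1 <= p <= n -> nth false T p.-1 = (sig p + k < n)).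

Lemma suff_cons p : 1 <= p <= n -> suff1 T p = nth false T p.-1 :: suff1 T p.+1.
Proof. move=> Hp; rewrite /suff1 (drop_nth false) ?HT; last lia. by rewrite prednK //; lia. Qed.

Lemma order_lemma : forall j p q, n - p = j -> 1 <= p <= n -> 1 <= q <= n ->
  sig q < sig p -> lex_lt (suff1 T p) (suff1 T q).
Proof.
elim=> [|j IH] p q Hj Hp Hq Hlt.
- have Ep : p = n by lia.
  have Hqn : q < n.
    case: (ltngtP q n) => // Eq; [lia| ]. subst q. have := Hsig _ Hp; lia.
  rewrite (suff_cons _ Hp) (suff_cons _ Hq) Hlet // Hlet // Ep.
  have D1 : suff1 T n.+1 = [::] by rewrite /suff1 /= drop_oversize // HT.
  have D2 : suff1 T q.+1 = nth false T q :: drop q.+1 T.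
    by rewrite /suff1 /= (drop_nth false) // HT.
  rewrite D1 D2 /=.
  rewrite Hn. have -> : (n.-1 + k < n) = false by lia.
  by case: (_ < n).
- have Hpn : p < n by lia.
  have Hqn : q < n.
    case: (ltngtP q n) => // Eq; [lia| ]. subst q. have := Hsig _ Hp; lia.
  rewrite (suff_cons _ Hp) (suff_cons _ Hq) Hlet // Hlet //=.
  have Hs1 := Hstep p ltac:(lia). have Hs2 := Hstep q ltac:(lia).
  have Hsp := Hsig _ Hp.
  have IH' : (sig p + k < n) = (sig q + k < n) -> lex_lt (suff1 T p.+1) (suff1 T q.+1).
    move=> E; apply: (IH p.+1 q.+1); try lia.
    rewrite Hs1 Hs2 -E. case: ifP; lia.
  case: (ltnP (sig p + k) n) => H1.
  + have H2 : sig q + k < n by lia. by rewrite H2 eqxx IH' ?orbT // H1 H2.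
  + case: (ltnP (sig q + k) n) => H2 //=. rewrite IH' //. rewrite ltnNge H1 ltnNge H2 //.
Qed.
End Order.

Lemma mod_char q n r x : x = q * n + r -> r < n -> x %% n = r.
Proof. by move=> -> ?; rewrite modnMDl modn_small. Qed.

Section Arith.
Variables (n k z : nat).
Hypotheses (Hk : 0 < k) (Hkn : k < n) (KK : k * k + 1 = z * n).
Definition sg p := (p * k).-1 %% n.

Lemma sg_lt p : sg p < n.
Proof. rewrite /sg ltn_mod; lia. Qed.

Lemma sg_n : sg n = n.-1.
Proof.
rewrite /sg (@mod_char k.-1 n n.-1) //; last lia.
have -> : n * k = (k.-1).+1 * n by rewrite mulnC prednK.
rewrite mulSn. lia.
Qed.

Lemma sg_step p : 1 <= p -> sg p.+1 = if sg p + k < n then sg p + k else sg p + k - n.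
Proof.
move=> Hp. have Hd := divn_eq (p * k).-1 n.
rewrite /sg -/(sg p) in Hd *.
have Hs := sg_lt p.
have Hpk : 0 < p * k by rewrite muln_gt0; lia.
move: ((p * k).-1 %/ n) Hd => Q Hd.
case: ifP => H.
- apply: (@mod_char Q) => //. rewrite mulSn. lia.
- apply: (@mod_char Q.+1); last lia. rewrite !mulSn. lia.
Qed.

Lemma sg_inj p q : 1 <= p <= n -> 1 <= q <= n -> sg p = sg q -> p = q.
Proof.
wlog: p q / p <= q.
  move=> W Hp Hq E. case: (leqP p q) => H; first exact: W.
  symmetry; apply: W => //; lia.
move=> Hpq Hp Hq E.
have Hd1 := divn_eq (p * k).-1 n. have Hd2 := divn_eq (q * k).-1 n.
rewrite /sg in E. rewrite E in Hd1.
have Hpk : 0 < p * k by rewrite muln_gt0; lia.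
have Hqk : 0 < q * k by rewrite muln_gt0; lia.
have Hle : p * k <= q * k by rewrite leq_mul2r Hpq orbT.
move: ((q * k).-1 %/ n) ((p * k).-1 %/ n) ((q * k).-1 %% n) Hd1 Hd2 => Q2 Q1 s Hd1 Hd2.
have E1 : (q - p) * k = (Q2 - Q1) * n.
  rewrite !mulnBl. lia.
clear Hd1 Hd2 E.
have D1 : n %| (q - p) * (k * k + 1).
  by rewrite KK mulnA dvdn_mull.
have D2 : n %| (q - p) * (k * k).
  by rewrite mulnA E1 -mulnA (mulnC n) mulnA dvdn_mull.
rewrite mulnDr muln1 dvdn_addr // in D1.
case: (posnP (q - p)) => H; first lia.
have := dvdn_leq H D1. lia.
Qed.

Definition md x := mod1 x n.

Lemma md_range x : 1 <= md x <= n.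
Proof. rewrite /md /mod1. have := @ltn_pmod (x + n - 1) n ltac:(lia). lia. Qed.

Lemma sg_md x : 1 <= x -> 1 <= sg x -> sg (md (x + k)) = (sg x).-1.
Proof.
move=> Hx Hs. rewrite /md /mod1.
have Hd := divn_eq (x + k + n - 1) n.
have Hd2 := divn_eq (x * k).-1 n.
have Hsx := sg_lt x.
rewrite /sg -/(sg x) in Hd2 *.
move: ((x + k + n - 1) %/ n) ((x + k + n - 1) %% n) ((x * k).-1 %/ n) (sg x) Hd Hd2 Hsx Hs
  => u v s0 sx Hd Hd2 Hsx Hs.
have Hv : (v + 1) + u * n = x + k + n by lia.
have Hv2 : (v + 1) * k + u * k * n = x * k + k * k + n * k.
  by rewrite -mulnAC -mulnDl Hv !mulnDl.
have Hxk : 0 < x * k by rewrite muln_gt0; lia.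
have Hvk : 0 < (v + 1) * k by rewrite muln_gt0; lia.
have E : ((v + 1) * k).-1 + u * k * n = (s0 + z + k) * n + sx.-1.
  rewrite !mulnDl (mulnC k n). lia.
rewrite -(modnMDl (u * k) _ n) addnC E modnMDl modn_small; lia.
Qed.
End Arith.

Lemma lex_irr u : lex_lt u u = false.
Proof. by elim: u => //= x u ->; rewrite ltnn eqxx. Qed.

Lemma lex_asym u v : lex_lt u v -> lex_lt v u -> False.
Proof.
elim: u v => [|x u IH] [|y v] //=.
by case: x; case: y => //=; apply: IH.
Qed.

Lemma letter M p : odd M -> 1 <= p <= fibl M.+2 ->
  nth false (fibw M.+2) p.-1 = (fibl M.+2 <= sg (fibl M.+2) (fibl M) p + fibl M).
Proof.
move=> Ho Hp.
have H0 := Sall M p.-1 ltac:(lia).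
have H1 := Sall M p ltac:(lia).
rewrite Ho prednK in H0 H1; last lia.
have Hc : cnt M.+2 p = cnt M.+2 p.-1 + nth false (fibw M.+2) p.-1.
  rewrite /cnt -{1}(prednK (n:=p)); last lia.
  rewrite (take_nth false); last by rewrite -/(fibl M.+2); lia.
  by rewrite -cats1 count_cat /= addn0.
rewrite Hc in H1. rewrite /sg.
have Hpk : 0 < p * fibl M.
  have HM : 0 < M by move: Ho; case: (M).
  rewrite muln_gt0 fibl_pos ?andbT //; lia.
move: Hpk;
move: (cnt M.+2 p.-1) (nth false (fibw M.+2) p.-1) (fibl M.+2) (fibl M) H0 H1
  => c0 b n k H0 H1 Hpk.
rewrite /= !mulSn in H0 H1 *.
have Hn : 0 < n by lia.
rewrite (@mod_char c0 n ((p * k).-1 - c0 * n)); [|lia|lia].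
case: b H1 => /= H1; rewrite ?addn1 ?addn0 ?mulSn in H1.
- symmetry; lia.
- symmetry; apply/negbTE; rewrite -ltnNge; lia.
Qed.

Theorem mainTheorem17 (m : nat) :
  3 <= m -> odd m ->
  (exists P, is_suffix_array (compl (fibw m)) P) /\
  (forall P, is_suffix_array (compl (fibw m)) P ->
     is_AP_perm (fibl m) (fibl (m - 2)) P /\ at1 P 1 = fibl m).
Proof.
move=> H3 Hodd.
have [M EM] : exists M, m = M.+2 by exists (m - 2); lia.
subst m.
have -> : M.+2 - 2 = M by lia.
have HoM : odd M by move: Hodd; rewrite /= negbK.
have HM : 0 < M by move: HoM; case: (M).
have Hn := fiblS M.
have Hk : 0 < fibl M by exact: fibl_pos.
have Hu : 0 < fibl M.+1 by exact: fibl_pos.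
have C := cassini M. rewrite HoM /= in C.
have Hu2 : fibl M.+1 <= 2 * fibl M by nia.
have KK : fibl M * fibl M + 1 = (2 * fibl M - fibl M.+1) * fibl M.+2.
  rewrite Hn. nia.
have Hkn : fibl M < fibl M.+2 by lia.
set n := fibl M.+2 in Hn KK Hkn *.
set k := fibl M in Hk C Hu2 KK Hkn Hn *.
set z := 2 * k - fibl M.+1 in KK.
set T := compl (fibw M.+2).
have HT : size T = n by rewrite size_map.
set sig := sg n k.
have Hlet : forall p, 1 <= p <= n -> nth false T p.-1 = (sig p + k < n).
  move=> p Hp. rewrite /T /compl (nth_map false); last by rewrite -/(fibl M.+2); lia.
  by rewrite letter // ltnNge.
have OL : forall p q, 1 <= p <= n -> 1 <= q <= n -> sig q < sig p ->
    lex_lt (suff1 T p) (suff1 T q).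
  move=> p q; apply: (order_lemma _ _ _ _ HT Hk _ (sg_n _ _ _ Hk Hkn KK) _ Hlet (n - p) p q (erefl _)).
  - move=> x _; exact: (sg_lt _ _ _ Hk Hkn KK).
  - move=> x Hx; apply: (sg_step _ _ _ Hk Hkn KK); lia.
have Inj := sg_inj _ _ _ Hk Hkn KK.
have Hsl := sg_lt _ _ _ Hk Hkn KK.
split.
- pose P0 := sort (fun x y => sig y <= sig x) (iota 1 n).
  have Pp : perm_eq P0 (iota 1 n) by rewrite perm_sort.
  have Ps : sorted (fun x y => sig y <= sig x) P0.
    by apply: sort_sorted => x y; apply: leq_total.
  have Pu : uniq P0 by rewrite (perm_uniq Pp) iota_uniq.
  have Psz : size P0 = n by rewrite (perm_size Pp) size_iota.
  have Pm : forall i, i < n -> 1 <= nth 0 P0 i <= n.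
    move=> i Hi. have : nth 0 P0 i \in iota 1 n by rewrite -(perm_mem Pp) mem_nth // Psz.
    rewrite mem_iota. lia.
  exists P0; split; first by rewrite HT.
  move=> i; rewrite HT => Hi.
  rewrite /at1 /=.
  have Hi1 : i.-1 < n by lia.
  have Hi2 : i < n by lia.
  have Hle : sig (nth 0 P0 i) <= sig (nth 0 P0 i.-1).
    have := (sortedP 0 Ps) i.-1. rewrite prednK; last lia. apply; lia.
  have Hne : nth 0 P0 i.-1 != nth 0 P0 i by rewrite nth_uniq ?Psz //; lia.
  apply: OL; [exact: Pm|exact: Pm|].
  rewrite ltn_neqAle Hle andbT. apply/negP => /eqP E.
  move/eqP: Hne; apply; apply: Inj; [exact: Pm|exact: Pm|by []].
- move=> P [Hperm Hsort]; rewrite HT in Hperm Hsort.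
  have Psz : size P = n by rewrite (perm_size Hperm) size_iota.
  have Pm : forall i, 1 <= i <= n -> 1 <= at1 P i <= n.
    move=> i Hi. have : at1 P i \in iota 1 n by rewrite -(perm_mem Hperm) mem_nth // Psz; lia.
    rewrite mem_iota. lia.
  have Dec : forall i, 1 <= i < n -> sig (at1 P i.+1) < sig (at1 P i).
    move=> i Hi. have Hl := Hsort i Hi.
    have Pi := Pm i ltac:(lia). have Pi1 := Pm i.+1 ltac:(lia).
    case: (ltngtP (sig (at1 P i.+1)) (sig (at1 P i))) => // H.
    + exfalso; apply: (lex_asym _ _ Hl); exact: OL.
    + have E := Inj _ _ Pi1 Pi H. by rewrite E lex_irr in Hl.
  have Up : forall i, 1 <= i <= n -> sig (at1 P i) <= n - i.
    elim=> [|i IH] Hi; first lia.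
    case: (posnP i) => Hi0.
    + subst i. have : sig (at1 P 1) < n := Hsl _. lia.
    + have := IH ltac:(lia). have := Dec i ltac:(lia). lia.
  have Lo : forall j, j < n -> j <= sig (at1 P (n - j)).
    elim=> [|j IH] Hj; first lia.
    have := IH ltac:(lia). have := Dec (n - j.+1) ltac:(lia).
    have -> : (n - j.+1).+1 = n - j by lia. lia.
  have Ex : forall i, 1 <= i <= n -> sig (at1 P i) = n - i.
    move=> i Hi. have := Up i Hi. have := Lo (n - i) ltac:(lia).
    have -> : n - (n - i) = i by lia. lia.
  have P1 : at1 P 1 = n.
    apply: Inj; [apply: Pm; lia|lia|]. have E1 := Ex 1 ltac:(lia).
    have E2 := sg_n _ _ _ Hk Hkn KK. rewrite /sig in E1. rewrite E1 E2. lia.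
  split => //.
  split => //. split => //. split; first lia.
  move=> i Hi.
  have Pi := Pm i ltac:(lia). have Pi1 := Pm i.+1 ltac:(lia).
  have E1 := Ex i.+1 ltac:(lia). have E0 := Ex i ltac:(lia).
  rewrite /sig in E1 E0.
  apply: Inj => //; first exact: (md_range _ _ _ Hk Hkn KK).
  rewrite E1.
  rewrite -/(md n (at1 P i + k)) (sg_md _ _ _ Hk Hkn KK); try lia.
Qed.
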